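(* Let $D$ be a diagram of a link $L$, let $n\ge3$ be odd, and let $c_1,\dots,c_n\in MG(L)$ be conjugates of elements $a_1,\dots,a_n\in A(D)$ respectively. Then $c_1c_2^{-1}c_3c_4^{-1}\cdots c_{n-1}^{-1}c_n=c_nc_{n-1}^{-1}c_{n-2}\cdots c_2^{-1}c_1$.
   Context: Let $L$ be an oriented classical link with diagram $D$; $A(D)$ is the set of arcs of $D$. At a crossing, $a_1$ denotes the overpassing arc, $a_2$ the underpassing arc on the right of $a_1$ (with respect to the orientation of $a_1$), $a_3$ the underpassing arc on the left of $a_1$. The medial group $MG(L)$ is the group generated by $A(D)$ subject to the relations (i) $c_1c_2^{-1}c_3=c_3c_2^{-1}c_1$ whenever $c_1,c_2,c_3$ are conjugates of elements of $A(D)$, and (ii) $a_1a_2a_1^{-1}=a_3$ at every crossing of $D$. *)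

(* Defs.v *)
From mathcomp Require Import all_boot.
Set Implicit Arguments. Unset Strict Implicit. Unset Printing Implicit Defensive.

(* Combinatorial data of an oriented link diagram D:
   a finite set of arcs A(D) and, for each crossing, the triple
   (a1, a2, a3) = (overpassing arc, underpassing arc on the right of a1,
   underpassing arc on the left of a1). *)
Record diagram := Diagram {
  darc : finType;
  crossings : seq (darc * darc * darc)
}.

(* Words in the free group on A(D): letters (true, a) = a, (false, a) = a^-1. *)
Definition word (D : diagram) := seq (bool * darc D).

Definition gen (D : diagram) (a : darc D) : word D := [:: (true, a)].

Definition winv (D : diagram) (w : word D) : word D :=
  rev (map (fun x => (~~ x.1, x.2)) w).

Definition conjw (D : diagram) (w : word D) (a : darc D) : word D :=
  w ++ gen a ++ winv w.

(* Equality in the medial group MG(L) = <A(D) | (i), (ii)>,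
   i.e. the congruence on words generated by free reduction and
   the relations (i), (ii). *)
Inductive mg_eq (D : diagram) : word D -> word D -> Prop :=
| mg_refl w : mg_eq w w
| mg_sym w v : mg_eq w v -> mg_eq v w
| mg_trans w v u : mg_eq w v -> mg_eq v u -> mg_eq w u
| mg_free u v (b : bool) (a : darc D) :
    mg_eq (u ++ [:: (b, a); (~~ b, a)] ++ v) (u ++ v)
| mg_medial u v (w1 w2 w3 : word D) (x1 x2 x3 : darc D) :
    let c1 := conjw w1 x1 in let c2 := conjw w2 x2 in let c3 := conjw w3 x3 in
    mg_eq (u ++ c1 ++ winv c2 ++ c3 ++ v) (u ++ c3 ++ winv c2 ++ c1 ++ v)
| mg_cross u v (a1 a2 a3 : darc D) :
    (a1, a2, a3) \in crossings D ->
    mg_eq (u ++ gen a1 ++ gen a2 ++ winv (gen a1) ++ v) (u ++ gen a3 ++ v).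

(* c_1 c_2^-1 c_3 ... c_n  (c_i inverted for even i, 1-indexed) *)
Definition alt_term (D : diagram) (c : nat -> word D) (i : nat) : word D :=
  if odd i then winv (c i) else c i.
Definition alt_prod (D : diagram) (n : nat) (c : nat -> word D) : word D :=
  flatten [seq alt_term c i | i <- iota 0 n].
Definition alt_prod_rev (D : diagram) (n : nat) (c : nat -> word D) : word D :=
  flatten [seq alt_term c i | i <- rev (iota 0 n)].

(* Main.v *)
Require Import Defs.
From mathcomp Require Import all_boot zify.
Set Implicit Arguments. Unset Strict Implicit. Unset Printing Implicit Defensive.

Definition isc (D : diagram) (x : word D) := exists w a, x = conjw w a.
Fixpoint allc (D : diagram) (s : seq (word D)) : Prop :=
  match s with [::] => True | x :: s' => isc x /\ allc s' end.
Fixpoint altw (D : diagram) (b : bool) (s : seq (word D)) : word D :=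
  match s with [::] => [::] | x :: s' => (if b then winv x else x) ++ altw (~~ b) s' end.

Lemma ctx0 (D : diagram) (x y u v : word D) :
  mg_eq x y -> mg_eq (u ++ x ++ v) (u ++ y ++ v).
Proof.
move=> H; elim: H u v.
- by move=> *; apply: mg_refl.
- by move=> w v0 _ IH u v; apply: mg_sym.
- by move=> w v0 u0 _ IH1 _ IH2 u v; apply: mg_trans (IH1 u v) (IH2 u v).
- move=> u0 v0 b a u v; move: (mg_free (u ++ u0) (v0 ++ v) b a).
  by rewrite -!catA.
- move=> u0 v0 w1 w2 w3 x1 x2 x3 c1 c2 c3 u v; rewrite /c1 /c2 /c3.
  move: (mg_medial (u ++ u0) (v0 ++ v) w1 w2 w3 x1 x2 x3); cbv zeta.
  by rewrite -!catA.
- move=> u0 v0 a1 a2 a3 Hc u v; move: (mg_cross (u ++ u0) (v0 ++ v) Hc).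
  by rewrite -!catA.
Qed.

Lemma step (D : diagram) (u v x y L R : word D) :
  mg_eq x y -> L = u ++ x ++ v -> mg_eq (u ++ y ++ v) R -> mg_eq L R.
Proof. by move=> H -> H2; apply: mg_trans (ctx0 u v H) H2. Qed.
Arguments step {D} u v {x y L R}.

Ltac nrm := rewrite /= ?cats0 ?cat0s -?catA ?cats0 ?cat0s.

Lemma winv_cat (D : diagram) (x y : word D) : winv (x ++ y) = winv y ++ winv x.
Proof. by rewrite /winv map_cat rev_cat. Qed.

Lemma winvK (D : diagram) (x : word D) : winv (winv x) = x.
Proof.
rewrite /winv map_rev revK -map_comp -[RHS]map_id.
by apply: eq_map => -[b a] /=; rewrite negbK.
Qed.

Lemma cancel_r (D : diagram) (w : word D) : mg_eq (w ++ winv w) [::].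
Proof.
elim: w => [|e w IH]; first by apply: mg_refl.
have -> : winv (e :: w) = winv w ++ [:: (~~ e.1, e.2)].
  by rewrite /winv /= rev_cons cats1.
apply: (step [:: e] [:: (~~ e.1, e.2)] IH); first by rewrite -!catA.
case: e => b a /=; exact: (mg_free [::] [::] b a).
Qed.

Lemma winv_eq (D : diagram) (X Y : word D) : mg_eq X Y -> mg_eq (winv X) (winv Y).
Proof.
move=> H.
apply: (step (winv X) [::] (mg_sym (cancel_r Y))); first by rewrite /= cats0.
apply: (step (winv X) (winv Y) (mg_sym H)); first by rewrite /= cats0.
rewrite ?cats0 catA.
apply: (step [::] (winv Y) (cancel_r (winv X))); first by rewrite winvK.
exact: mg_refl.
Qed.

Lemma med (D : diagram) (x y z : word D) : isc x -> isc y -> isc z ->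
  mg_eq (x ++ winv y ++ z) (z ++ winv y ++ x).
Proof.
move=> [w1 [a1 ->]] [w2 [a2 ->]] [w3 [a3 ->]].
move: (mg_medial [::] [::] w1 w2 w3 a1 a2 a3); cbv zeta.
by rewrite /= !cats0.
Qed.

Lemma imed (D : diagram) (x y z : word D) : isc x -> isc y -> isc z ->
  mg_eq (winv x ++ y ++ winv z) (winv z ++ y ++ winv x).
Proof.
move=> hx hy hz; move: (winv_eq (med hz hy hx)).
by rewrite !winv_cat !winvK -!catA.
Qed.

Lemma core (D : diagram) k : forall t : seq (word D), size t = k.*2.+1 -> allc t ->
 (forall x y, isc x -> isc y ->
    mg_eq (x ++ winv y ++ altw false t) (altw false t ++ winv y ++ x)) /\
 (forall y u, isc y -> isc u ->
    mg_eq (winv y ++ altw false t ++ winv u) (winv u ++ altw false t ++ winv y)).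
Proof.
elim: k => [|k IH].
  case=> [|z [|? ?]] //= _ [hz _]; rewrite cats0; split.
    by move=> x y hx hy; apply: med.
  by move=> y u hy hu; apply: imed.
case=> [|z [|v t]] //= [hs] [hz [hv ht]].
have [A B] := IH t hs ht.
split.
  move=> x y hx hy.
  apply: (step [::] (winv v ++ altw false t) (med hx hy hz)); first by nrm.
  apply: (step (z ++ winv y) [::] (A x v hx hv)); first by nrm.
  apply: (step z x (B y v hy hv)); first by nrm.
  nrm; exact: mg_refl.
move=> y u hy hu.
apply: (step [::] (altw false t ++ winv u) (imed hy hz hv)); first by nrm.
apply: (step (winv v ++ z) [::] (B y u hy hu)); first by nrm.
apply: (step (winv v) (winv y) (A z u hz hu)); first by nrm.
apply: (step [::] (z ++ winv y) (B v u hv hu)); first by nrm.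
apply: (step (winv u) (winv y) (mg_sym (A z v hz hv))); first by nrm.
nrm; exact: mg_refl.
Qed.

Lemma altw_cat (D : diagram) (s1 s2 : seq (word D)) b :
  altw b (s1 ++ s2) = altw b s1 ++ altw (b (+) odd (size s1)) s2.
Proof.
elim: s1 b => [|x s1 IH] b /=; first by rewrite addbF.
by rewrite IH catA addNb -addbN.
Qed.

Lemma revlem (D : diagram) k : forall t : seq (word D), size t = k.*2.+1 -> allc t ->
  mg_eq (altw false t) (altw false (rev t)).
Proof.
elim: k => [|k IH].
  case=> [|z [|? ?]] //= _ _; exact: mg_refl.
case=> [|x [|y t]] //= [hs] [hx [hy ht]].
have [A _] := core hs ht.
apply: mg_trans (A x y hx hy) _.
rewrite !rev_cons -!cats1 -catA altw_cat size_rev hs /= odd_double /= cats0.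
apply: (step [::] (winv y ++ x) (IH t hs ht)); first by [].
exact: mg_refl.
Qed.

Lemma flat_alt (D : diagram) (c : nat -> word D) l b :
  (forall k, k < size l -> odd (nth 0 l k) = b (+) odd k) ->
  flatten [seq alt_term c i | i <- l] = altw b (map c l).
Proof.
elim: l b => [|x l IH] b H //=.
have hx : odd x = b by move: (H 0 isT); rewrite addbF.
rewrite /alt_term hx (IH (~~ b)) //.
move=> k hk; move: (H k.+1 hk) => /=; rewrite addNb -addbN //.
Qed.

(* indices are 0-based: c i, a i for i < n correspond to c_{i+1}, a_{i+1} *)
Theorem lemma27 (D : diagram) (n : nat) (hn : 3 <= n) (hodd : odd n)
    (a : nat -> darc D) (w : nat -> word D) :
  let c := fun i => conjw (w i) (a i) in
  mg_eq (alt_prod n c) (alt_prod_rev n c).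
Proof.
move=> c.
have hall : forall l, allc (map c l).
  by elim=> [|i l IH] //=; split => //; exists (w i), (a i).
have hsz : size (map c (iota 0 n)) = (n./2).*2.+1.
  by rewrite size_map size_iota -{1}(odd_double_half n) hodd add1n.
rewrite /alt_prod /alt_prod_rev (@flat_alt _ c _ false); last first.
  by move=> k; rewrite size_iota => hk; rewrite nth_iota.
rewrite (@flat_alt _ c _ false); last first.
  move=> k; rewrite size_rev size_iota => hk.
  rewrite nth_rev ?size_iota // nth_iota; last by lia.
  rewrite add0n oddB // hodd /=; by case: (odd k).
rewrite map_rev; exact: revlem hsz (hall _).
Qed.
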